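(* Let $A$ be a linearly ordered set and let $G$ be a passable game over $A$ that is in canonical form. Then $G$ is monotone.
   Context: Games over a poset $A$ are defined inductively: for each $a\in A$ there is an atomic game $[a]$, which has no options; and if $L$ and $R$ are non-empty sets of games, then $\{L\mid R\}$ is a composite game with left options $L$ and right options $R$. The relations $\le$ and $\lhd$ are defined by simultaneous recursion: $G\le H$ iff (1) every left option $G^L$ of $G$ satisfies $G^L\lhd H$, (2) every right option $H^R$ of $H$ satisfies $G\lhd H^R$, and (3) if $G$ or $H$ is atomic then $G\lhd H$; and $G\lhd H$ iff (1) some right option $G^R$ of $G$ satisfies $G^R\le H$, or (2) some left option $H^L$ of $H$ satisfies $G\le H^L$, or (3) $G=[a]$, $H=[b]$ are atomic and $a\le b$. $G\equiv H$ means $G\le H$ and $H\le G$. A game $G$ is passable if $G\lhd G$ and recursively all its options are passable. A left option $G^L$ is good if $G\le G^L$, a right option $G^R$ is good if $G^R\le G$; a game is monotone if all its options are good and recursively all its options are monotone. Canonical form: among distinct left options $H,K$ of $G$, $K$ is dominated if $K\le H$; among distinct right options $H,K$, $K$ is dominated if $H\le K$. A left option $H$ of $G$ is reversible if $H$ has a right option $K$ with $K\le G$; a right option $H$ of $G$ is reversible if $H$ has a left option $K$ with $G\le K$. An option $H$ of $G$ is a passing option if $H\equiv G$. $G$ is in canonical form if it has no dominated, reversible or passing options and all its options are in canonical form. *)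

(* Defs.v *)
From mathcomp Require Import all_boot all_order.
Set Implicit Arguments. Unset Strict Implicit. Unset Printing Implicit Defensive.
Import Order.TTheory.
Local Open Scope order_scope.

(* A composite game {L | R} is given by two
   non-empty families of options indexed by arbitrary (possibly infinite)
   types I and J; the sets of options are the images of these families. *)
Inductive game (A : Type) : Type :=
| Atom : A -> game A
| Comp : forall (I J : Type), inhabited I -> inhabited J ->
         (I -> game A) -> (J -> game A) -> game A.

Arguments Atom {A} a.
Arguments Comp {A} I J _ _ _ _.

Section Games.
Context {d : Order.disp_t} {A : porderType d}.

(* rel G H = (G <= H, G <| H), by simultaneous recursion. *)
Fixpoint rel (G : game A) : game A -> Prop * Prop :=
  fix relH (H : game A) : Prop * Prop :=
  match G, H with
  | Atom a, Atom b => let lf := (a <= b) in (lf : Prop, lf : Prop)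
  | Atom a, Comp _ _ _ _ HL HR =>
      let lf := exists i, (relH (HL i)).1 in
      ((forall j, (relH (HR j)).2) /\ lf, lf)
  | Comp _ _ _ _ GL GR, Atom b =>
      let lf := exists j, (rel (GR j) H).1 in
      ((forall i, (rel (GL i) H).2) /\ lf, lf)
  | Comp _ _ _ _ GL GR, Comp _ _ _ _ HL HR =>
      ((forall i, (rel (GL i) H).2) /\ (forall j, (relH (HR j)).2),
       (exists j, (rel (GR j) H).1) \/ (exists i, (relH (HL i)).1))
  end.

Definition gle (G H : game A) : Prop := (rel G H).1.
Definition glf (G H : game A) : Prop := (rel G H).2.
Definition gequiv (G H : game A) : Prop := gle G H /\ gle H G.

(* Identity of games as (set-theoretic) objects: equal atoms, or equal sets
   of left options and equal sets of right options. *)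
Fixpoint gid (G H : game A) : Prop :=
  match G, H with
  | Atom a, Atom b => a = b
  | Comp _ _ _ _ GL GR, Comp _ _ _ _ HL HR =>
      (forall i, exists i', gid (GL i) (HL i')) /\
      (forall i', exists i, gid (GL i) (HL i')) /\
      (forall j, exists j', gid (GR j) (HR j')) /\
      (forall j', exists j, gid (GR j) (HR j'))
  | _, _ => False
  end.

Definition LeftOpt (G K : game A) : Prop :=
  match G with Atom _ => False | Comp _ _ _ _ L _ => exists i, L i = K end.
Definition RightOpt (G K : game A) : Prop :=
  match G with Atom _ => False | Comp _ _ _ _ _ R => exists j, R j = K end.

Fixpoint passable (G : game A) : Prop :=
  glf G G /\
  match G with
  | Atom _ => True
  | Comp _ _ _ _ L R => (forall i, passable (L i)) /\ (forall j, passable (R j))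
  end.

Fixpoint monotone (G : game A) : Prop :=
  match G with
  | Atom _ => True
  | Comp _ _ _ _ L R =>
      (forall i, gle G (L i)) /\ (forall j, gle (R j) G) /\
      (forall i, monotone (L i)) /\ (forall j, monotone (R j))
  end.

Fixpoint canonical (G : game A) : Prop :=
  match G with
  | Atom _ => True
  | Comp _ _ _ _ L R =>
      (* no dominated left options *)
      (forall i i', ~ gid (L i) (L i') -> ~ gle (L i') (L i)) /\
      (* no dominated right options *)
      (forall j j', ~ gid (R j) (R j') -> ~ gle (R j) (R j')) /\
      (* no reversible left options *)
      (forall i K, RightOpt (L i) K -> ~ gle K G) /\
      (* no reversible right options *)
      (forall j K, LeftOpt (R j) K -> ~ gle G K) /\
      (* no passing options *)
      (forall i, ~ gequiv (L i) G) /\ (forall j, ~ gequiv (R j) G) /\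
      (forall i, canonical (L i)) /\ (forall j, canonical (R j))
  end.

End Games.

(* Main.v *)
Require Import Defs.
From mathcomp Require Import all_boot all_order.
From Stdlib Require Import Classical.
Import Order.TTheory.
Local Open Scope order_scope.

Section S.
Context {d : Order.disp_t} {A : porderType d}.
Implicit Types G H K : game A.

Definition isAtom (G : game A) := exists a, G = Atom a.

Lemma game_ind' (P : game A -> Prop) :
  (forall G, (forall K, LeftOpt G K -> P K) -> (forall K, RightOpt G K -> P K) -> P G) ->
  forall G, P G.
Proof.
move=> IH; elim=> [a|I J iI iJ L IHL R IHR].
  by apply: IH => K [].
apply: IH => K /= [x <-]; by [apply: IHL | apply: IHR].
Qed.

Lemma glf_char G H : glf G H <->
  (exists K, RightOpt G K /\ gle K H) \/ (exists K, LeftOpt H K /\ gle G K) \/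
  (exists a b, G = Atom a /\ H = Atom b /\ a <= b).
Proof.
case: G => [a|I J iI iJ GL GR]; case: H => [b|I' J' iI' iJ' HL HR];
  rewrite /glf /gle /=.
all: firstorder (subst; eauto; try discriminate).
all: try (match goal with h1 : Atom _ = Atom _, h2 : Atom _ = Atom _ |- _ => case: h1 => ->; case: h2 => -> end; done).
Qed.

Lemma gle_char G H : gle G H <->
  (forall K, LeftOpt G K -> glf K H) /\ (forall K, RightOpt H K -> glf G K) /\
  (isAtom G \/ isAtom H -> glf G H).
Proof.
case: G => [a|I J iI iJ GL GR]; case: H => [b|I' J' iI' iJ' HL HR];
  rewrite /glf /gle /isAtom /=.
all: firstorder (subst; eauto; try discriminate).
Qed.

Lemma gle_AA (a b : A) : gle (Atom a) (Atom b) = (a <= b). Proof. by []. Qed.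
Lemma glf_AA (a b : A) : glf (Atom a) (Atom b) = (a <= b). Proof. by []. Qed.

Lemma gle_refl G : gle G G.
Proof.
elim/game_ind': G => G IL IR; apply/gle_char; split; [|split].
- move=> K hK; apply/glf_char; right; left; exists K; auto.
- move=> K hK; apply/glf_char; left; exists K; auto.
- move=> [[a ->]|[a ->]]; by rewrite glf_AA.
Qed.

Lemma passable_glf {G} : passable G -> glf G G.
Proof. by case: G => [a|I J iI iJ L R] /= []. Qed.
Lemma passable_L {G K} : passable G -> LeftOpt G K -> passable K.
Proof. case: G => [a|I J iI iJ L R] /= [_] //. by move=> [h _] [i <-]. Qed.
Lemma passable_R {G K} : passable G -> RightOpt G K -> passable K.
Proof. case: G => [a|I J iI iJ L R] /= [_] //. by move=> [_ h] [i <-]. Qed.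

Definition T3 G H K := (gle G H -> gle H K -> gle G K) /\ (gle G H -> glf H K -> glf G K) /\
  (glf G H -> gle H K -> glf G K).

Lemma trans_all G H K : T3 G H K.
Proof.
move: H K; elim/game_ind': G => G IGL IGR H.
elim/game_ind': H => H IHL IHR K.
elim/game_ind': K => K IKL IKR.
have t2 : gle G H -> glf H K -> glf G K.
  move=> gGH /glf_char [[K' [rH gK']]|[[K' [lK gHK']]|[a [b [eH [eK ab]]]]]].
  - move/gle_char: gGH => [_ [h _]].
    exact: (proj2 (proj2 (IHR K' rH K)) (h _ rH) gK').
  - apply/glf_char; right; left; exists K'; split=> //.
    exact: (proj1 (IKL K' lK) gGH gHK').
  - move/gle_char: gGH => [_ [_ h]].
    have /glf_char := h (or_intror (ex_intro _ a eH)).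
    move=> [[K'' [rG gK'']]|[[K'' [lH _]]|[c [a' [eG [eH' ca]]]]]].
    + apply/glf_char; left; exists K''; split=> //.
      apply: (proj1 (IGR K'' rG H K) gK''). by rewrite eH eK gle_AA.
    + by move: lH; rewrite eH.
    + rewrite eG eK glf_AA; move: eH' ca; rewrite eH => -[<-] ca.
      exact: le_trans ca ab.
have t3 : glf G H -> gle H K -> glf G K.
  move=> /glf_char [[K' [rG gK']]|[[K' [lH gGK']]|[a [b [eG [eH ab]]]]]] gHK.
  - apply/glf_char; left; exists K'; split=> //.
    exact: (proj1 (IGR K' rG H K) gK' gHK).
  - move/gle_char: gHK => [h _].
    exact: (proj1 (proj2 (IHL K' lH K)) gGK' (h _ lH)).
  - move/gle_char: (gHK) => [_ [_ h]].
    have /glf_char := h (or_introl (ex_intro _ b eH)).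
    move=> [[K'' [rH _]]|[[K'' [lK gK'']]|[b' [c [eH' [eK bc]]]]]].
    + by move: rH; rewrite eH.
    + apply/glf_char; right; left; exists K''; split=> //.
      apply: (proj1 (IKL K'' lK) _ gK''). by rewrite eG eH gle_AA.
    + rewrite eG eK glf_AA; move: eH' bc; rewrite eH => -[<-] bc.
      exact: le_trans ab bc.
split; [|split] => //.
move=> gGH gHK; apply/gle_char; split; [|split].
- move=> K' lG; move/gle_char: gGH => [h _].
  exact: (proj2 (proj2 (IGL K' lG H K)) (h _ lG) gHK).
- move=> K' rK; move/gle_char: gHK => [_ [h _]].
  exact: (proj1 (proj2 (IKR K' rK)) gGH (h _ rK)).
- move=> [aG|aK].
  + move/gle_char: (gGH) => [_ [_ h]]. exact: t3 (h (or_introl aG)) gHK.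
  + move/gle_char: (gHK) => [_ [_ h]]. exact: t2 gGH (h (or_intror aK)).
Qed.

Lemma gid_gle {G H} : gid G H -> gle G H /\ gle H G.
Proof.
move: H; elim/game_ind': G => G IL IR H.
case: G IL IR => [a|I J iI iJ GL GR] IL IR; case: H => [b|I' J' iI' iJ' HL HR] //=.
  by move=> ->; split; apply: gle_refl.
move=> [h1 [h2 [h3 h4]]]; split; apply/gle_char; split; try split.
- move=> K [i <-]; have [i' g] := h1 i.
  apply/glf_char; right; left; exists (HL i'); split; first by exists i'.
  exact: (proj1 (IL _ (ex_intro _ i erefl) _ g)).
- move=> K [j' <-]; have [j g] := h4 j'.
  apply/glf_char; left; exists (GR j); split; first by exists j.
  exact: (proj1 (IR _ (ex_intro _ j erefl) _ g)).
- by move=> [[? ?]|[? ?]].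
- move=> K [i' <-]; have [i g] := h2 i'.
  apply/glf_char; right; left; exists (GL i); split; first by exists i.
  exact: (proj2 (IL _ (ex_intro _ i erefl) _ g)).
- move=> K [j <-]; have [j' g] := h3 j.
  apply/glf_char; left; exists (HR j'); split; first by exists j'.
  exact: (proj2 (IR _ (ex_intro _ j erefl) _ g)).
- by move=> [[? ?]|[? ?]].
Qed.

Lemma lemma_down G (a : A) : ~ isAtom G -> (forall K, LeftOpt G K -> glf K (Atom a)) ->
  forall H, (passable H -> gle H G -> gle H (Atom a)) /\ (passable H -> glf H G -> glf H (Atom a)).
Proof.
move=> nG hG; elim/game_ind' => H IL IR.
have Q : passable H -> glf H G -> glf H (Atom a).
  move=> pH /glf_char [[K [rH gK]]|[[K [lG gHK]]|[x [y [_ [eG _]]]]]].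
  - apply/glf_char; left; exists K; split=> //.
    exact: (proj1 (IR K rH) (passable_R pH rH) gK).
  - exact: (proj1 (proj2 (trans_all H K (Atom a))) gHK (hG K lG)).
  - by case: nG; exists y.
split=> // pH gHG.
have hL : forall K, LeftOpt H K -> glf K (Atom a).
  move=> K lH; move/gle_char: (gHG) => [h _].
  exact: (proj2 (IL K lH) (passable_L pH lH) (h _ lH)).
apply/gle_char; split; [|split] => //.
move=> _; have /glf_char := passable_glf pH.
move=> [[K [rH gK]]|[[K [lH gHK]]|[x [y [eH _]]]]].
- apply/glf_char; left; exists K; split=> //.
  apply: (proj1 (IR K rH) (passable_R pH rH)).
  exact: (proj1 (trans_all K H G) gK gHG).
- exact: (proj1 (proj2 (trans_all H K (Atom a))) gHK (hL K lH)).
- apply: Q => //. move/gle_char: gHG => [_ [_ h]]. apply: h; left; by exists x.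
Qed.

Lemma lemma_up G (b : A) : ~ isAtom G -> (forall K, RightOpt G K -> glf (Atom b) K) ->
  forall H, (passable H -> gle G H -> gle (Atom b) H) /\ (passable H -> glf G H -> glf (Atom b) H).
Proof.
move=> nG hG; elim/game_ind' => H IL IR.
have Q : passable H -> glf G H -> glf (Atom b) H.
  move=> pH /glf_char [[K [rG gK]]|[[K [lH gGK]]|[x [y [eG _]]]]].
  - exact: (proj2 (proj2 (trans_all (Atom b) K H)) (hG K rG) gK).
  - apply/glf_char; right; left; exists K; split=> //.
    exact: (proj1 (IL K lH) (passable_L pH lH) gGK).
  - by case: nG; exists x.
split=> // pH gGH.
have hR : forall K, RightOpt H K -> glf (Atom b) K.
  move=> K rH; move/gle_char: (gGH) => [_ [h _]].
  exact: (proj2 (IR K rH) (passable_R pH rH) (h _ rH)).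
apply/gle_char; split; [|split] => //.
move=> _; have /glf_char := passable_glf pH.
move=> [[K [rH gKH]]|[[K [lH gHK]]|[x [y [eH _]]]]].
- exact: (proj2 (proj2 (trans_all (Atom b) K H)) (hR K rH) gKH).
- apply/glf_char; right; left; exists K; split=> //.
  apply: (proj1 (IL K lH) (passable_L pH lH)).
  exact: (proj1 (trans_all G H K) gGH gHK).
- apply: Q => //. move/gle_char: gGH => [_ [_ h]]. apply: h; right; by exists x.
Qed.

End S.

Section T.
Context {d : Order.disp_t} {A : orderType d}.
Implicit Types G H K X Y : game A.

Definition Cp X Y := gle Y X \/ glf X Y.

Lemma C_step X Y : passable X -> passable Y ->
  (forall K, LeftOpt Y K -> Cp K X) -> (forall K, RightOpt X K -> Cp Y K) ->
  (forall K, RightOpt Y K -> Cp X K) -> (forall K, LeftOpt X K -> Cp K Y) -> Cp X Y.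
Proof.
move=> pX pY h1 h2 h3 h4.
case: (classic (glf X Y)) => nXY; [by right|left].
have c1 : forall K, LeftOpt Y K -> glf K X.
  move=> K lY; case: (h1 K lY) => // g; case: nXY.
  apply/glf_char; right; left; exists K; auto.
have c2 : forall K, RightOpt X K -> glf Y K.
  move=> K rX; case: (h2 K rX) => // g; case: nXY.
  apply/glf_char; left; exists K; auto.
apply/gle_char; split; [|split] => // hA.
move: hA pX pY h1 h2 h3 h4 nXY c1 c2.
case: X => [a|I J iI iJ XL XR]; case: Y => [b|I' J' iI' iJ' YL YR] => hA pX pY h1 h2 h3 h4 nXY c1 c2.
- rewrite glf_AA in nXY *; case/orP: (le_total a b) => // ab; by case: nXY.
- have /glf_char := passable_glf pY.
  move=> [[K [rY gKY]]|[[K [lY gYK]]|[x [y [eY _]]]]]; last by [].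
  + case: (h3 K rY) => g.
    * apply/glf_char; left; exists K; auto.
    * case: nXY; exact: (proj2 (proj2 (trans_all _ K _)) g gKY).
  + exact: (proj1 (proj2 (trans_all _ K _)) gYK (c1 K lY)).
- have /glf_char := passable_glf pX.
  move=> [[K [rX gKX]]|[[K [lX gXK]]|[x [y [eX _]]]]]; last by [].
  + exact: (proj2 (proj2 (trans_all _ K _)) (c2 K rX) gKX).
  + case: (h4 K lX) => g.
    * apply/glf_char; right; left; exists K; auto.
    * case: nXY; exact: (proj1 (proj2 (trans_all _ K _)) gXK g).
- by case: hA => -[].
Qed.

Lemma C_all {X Y} : passable X -> passable Y -> Cp X Y.
Proof.
suff: forall X Y, (passable X -> passable Y -> Cp X Y) /\ (passable Y -> passable X -> Cp Y X).
  by move=> h; apply: (proj1 (h X Y)).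
clear X Y => X; elim/(@game_ind' _ A): X => X IXL IXR Y.
elim/(@game_ind' _ A): Y => Y IYL IYR.
split=> pA pB.
- apply: C_step => // K hK.
  + exact: (proj2 (IYL K hK) (passable_L pB hK) pA).
  + exact: (proj2 (IXR K hK Y) pB (passable_R pA hK)).
  + exact: (proj1 (IYR K hK) pA (passable_R pB hK)).
  + exact: (proj1 (IXL K hK Y) (passable_L pA hK) pB).
- apply: C_step => // K hK.
  + exact: (proj1 (IXL K hK Y) (passable_L pB hK) pA).
  + exact: (proj1 (IYR K hK) pB (passable_R pA hK)).
  + exact: (proj2 (IXR K hK Y) pA (passable_R pB hK)).
  + exact: (proj2 (IYL K hK) (passable_L pA hK) pB).
Qed.

End T.


Theorem theorem7p4 (d : Order.disp_t) (A : orderType d) (G : game A) :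
  passable G -> canonical G -> monotone G.
Proof.
elim: G => [a|I J iI iJ L IHL R IHR] //=.
move=> [pf [pL pR]] [cdL [cdR [crL [crR [cpL [cpR [ccL ccR]]]]]]].
set G := Comp I J iI iJ L R.
have pG : passable G by [].
have nG : ~ isAtom G by case=> ? .
have hL : forall i i', glf (L i') (L i).
  move=> i i'; case: (C_all (pL i') (pL i)) => // g.
  case: (classic (gid (L i') (L i))) => e.
  - have [g' _] := gid_gle e.
    exact: (proj2 (proj2 (trans_all _ _ _)) (passable_glf (pL i')) g').
  - by case: (cdL i' i e).
have hR : forall j j', glf (R j) (R j').
  move=> j j'; case: (C_all (pR j) (pR j')) => // g.
  case: (classic (gid (R j') (R j))) => e.
  - have [_ g'] := gid_gle e.
    exact: (proj1 (proj2 (trans_all _ _ _)) g' (passable_glf (pR j'))).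
  - by case: (cdR j' j e).
split; [|split; [|split]]; last 2 first.
- by move=> i; apply: IHL.
- by move=> j; apply: IHR.
- move=> i; apply/gle_char; split; [|split].
  + move=> K [i' <-]; exact: hL.
  + move=> K rK; case: (C_all pG (passable_R (pL i) rK)) => // g.
    by case: (crL i K rK).
  + move=> [[x e]|[x e]]; first by case: nG; exists x.
    rewrite e.
    have hx : forall K, LeftOpt G K -> glf K (Atom x).
      by move=> K [i' <-]; rewrite -e; apply: hL.
    have := proj1 (lemma_down _ _ nG hx G) pG (gle_refl G).
    move/gle_char => [_ [_ h]]; apply: h; right; by exists x.
- move=> j; apply/gle_char; split; [|split].
  + move=> K lK; case: (C_all (passable_L (pR j) lK) pG) => // g.
    by case: (crR j K lK).
  + move=> K [j' <-]; exact: hR.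
  + move=> [[x e]|[x e]]; last by case: nG; exists x.
    rewrite e.
    have hx : forall K, RightOpt G K -> glf (Atom x) K.
      by move=> K [j' <-]; rewrite -e; apply: hR.
    have := proj1 (lemma_up _ _ nG hx G) pG (gle_refl G).
    move/gle_char => [_ [_ h]]; apply: h; left; by exists x.
Qed.
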